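(* Let $V$ be a vector space and let $\Phi_1,\Phi_2:\mathcal{P}(V)\to[0,\infty]$ satisfy, for $i=1,2$: (1) $\Phi_i(\lambda A)=|\lambda|\Phi_i(A)$ for all $A\subseteq V$, $\lambda\in\mathbb{R}$; (2) $A\subseteq B\subseteq V$ implies $\Phi_i(A)\le\Phi_i(B)$; (3) $\Phi_i(\bigcup_{n=1}^\infty A_n)\le\sum_{n=1}^\infty\Phi_i(A_n)$ for all $A_1,A_2,\ldots\subseteq V$. If for every $n\ge1$ there is a subset $B_n\subseteq V$ with $\Phi_1(B_n)\le1$ and $\Phi_2(B_n)\ge c_n$, where $c_n\uparrow\infty$, then there exists a set $A\subseteq V$ with $\Phi_1(A)\le1$ and $\Phi_2(A)=\infty$.
   Context: $\mathcal{P}(V)$ denotes the power set of $V$; $\lambda A=\{\lambda a:a\in A\}$. *)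

(* Defs.v *)
From Stdlib Require Import Reals.
Open Scope R_scope.

Record is_vector_space (V : Type) (vzero : V) (vadd : V -> V -> V)
  (vopp : V -> V) (vscal : R -> V -> V) : Prop := {
  vs_addA : forall x y z, vadd x (vadd y z) = vadd (vadd x y) z;
  vs_addC : forall x y, vadd x y = vadd y x;
  vs_add0 : forall x, vadd x vzero = x;
  vs_addN : forall x, vadd x (vopp x) = vzero;
  vs_scalA : forall a b x, vscal a (vscal b x) = vscal (a * b) x;
  vs_scal1 : forall x, vscal 1 x = x;
  vs_scalDr : forall a x y, vscal a (vadd x y) = vadd (vscal a x) (vscal a y);
  vs_scalDl : forall a b x, vscal (a + b) x = vadd (vscal a x) (vscal b x)
}.

Definition subset {V : Type} (A B : V -> Prop) : Prop := forall v, A v -> B v.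
Definition bigUnion {V : Type} (A : nat -> V -> Prop) : V -> Prop :=
  fun v => exists n, A n v.
Definition scale_set {V : Type} (vscal : R -> V -> V) (l : R) (A : V -> Prop)
  : V -> Prop := fun v => exists a, A a /\ v = vscal l a.

(* Extended reals: finite values or +infinity (we only use the part [0,oo]). *)
Inductive ER : Type := Fin (x : R) | Inf.

Definition ER_le (x y : ER) : Prop :=
  match x, y with
  | _, Inf => True
  | Inf, Fin _ => False
  | Fin a, Fin b => a <= b
  end.

Definition ER_add (x y : ER) : ER :=
  match x, y with
  | Fin a, Fin b => Fin (a + b)
  | _, _ => Inf
  end.

(* scaling by a nonnegative real, with the convention 0 * oo = 0 *)
Definition ER_scale (r : R) (x : ER) : ER :=
  match x with
  | Fin a => Fin (r * a)
  | Inf => if Req_EM_T r 0 then Fin 0 else Inf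
  end.

Fixpoint ER_psum (f : nat -> ER) (N : nat) : ER :=
  match N with
  | O => Fin 0
  | S N' => ER_add (ER_psum f N') (f N')
  end.

Definition ER_is_sup (S : ER -> Prop) (s : ER) : Prop :=
  (forall x, S x -> ER_le x s) /\
  (forall u, (forall x, S x -> ER_le x u) -> ER_le s u).

Definition ER_series (f : nat -> ER) (s : ER) : Prop :=
  ER_is_sup (fun x => exists N, x = ER_psum f N) s.

Definition admissible {V : Type} (vscal : R -> V -> V)
  (Phi : (V -> Prop) -> ER) : Prop :=
  (forall A, ER_le (Fin 0) (Phi A)) /\
  (forall (A : V -> Prop) (l : R),
      Phi (scale_set vscal l A) = ER_scale (Rabs l) (Phi A)) /\
  (forall A B : V -> Prop, subset A B -> ER_le (Phi A) (Phi B)) /\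
  (forall (A : nat -> V -> Prop) (s : ER),
      ER_series (fun n => Phi (A n)) s -> ER_le (Phi (bigUnion A)) s).

(* Main.v *)
Require Import Defs.
From Stdlib Require Import Reals Lra Lia ZArith ClassicalEpsilon.
Open Scope R_scope.

Lemma nat_unb (r : R) : exists k : nat, r < INR k.
Proof.
  destruct (archimed r) as [Ha _].
  destruct (Z_lt_le_dec (up r) 0) as [Hz|Hz].
  - exists 0%nat. simpl. apply IZR_lt in Hz. lra.
  - exists (Z.to_nat (up r)). rewrite INR_IZR_INZ, Z2Nat.id by lia. lra.
Qed.

Lemma series_exists (f : nat -> ER) (g : nat -> R)
  (Hf : forall k, f k = Fin (g k))
  (Hg : forall k, 0 <= g k <= (/2)^(S k)) :
  exists s, ER_series f s /\ ER_le s (Fin 1).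
Proof.
  assert (Hp : forall N, exists r, ER_psum f N = Fin r /\ r <= 1 - (/2)^N).
  { induction N as [|N [r [Hr Hr2]]].
    - exists 0. simpl. split; [reflexivity| lra].
    - exists (r + g N). simpl. rewrite Hr, Hf. split; [reflexivity|].
      specialize (Hg N). simpl in Hg. lra. }
  set (E := fun r => exists N, ER_psum f N = Fin r).
  assert (Hb : bound E).
  { exists 1. intros x [N HN]. destruct (Hp N) as [r [Hr Hr2]].
    rewrite HN in Hr. inversion Hr; subst.
    pose proof (pow_lt (/2) N ltac:(lra)). lra. }
  destruct (completeness E Hb) as [m [Hm1 Hm2]].
  { exists 0. exists 0%nat. reflexivity. }
  exists (Fin m). split; [split|].
  - intros x [N ->]. destruct (Hp N) as [r [Hr _]]. rewrite Hr.
    simpl. apply Hm1. exists N. exact Hr.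
  - intros [u|] Hu; simpl; auto.
    apply Hm2. intros x [N HN]. specialize (Hu (Fin x) (ex_intro _ N (eq_sym HN))).
    exact Hu.
  - simpl. apply Hm2. intros x [N HN]. destruct (Hp N) as [r [Hr Hr2]].
    rewrite HN in Hr. inversion Hr; subst.
    pose proof (pow_lt (/2) N ltac:(lra)). lra.
Qed.

Theorem mainTheorem4 (V : Type) (vzero : V) (vadd : V -> V -> V)
  (vopp : V -> V) (vscal : R -> V -> V)
  (HV : is_vector_space V vzero vadd vopp vscal)
  (Phi1 Phi2 : (V -> Prop) -> ER)
  (H1 : admissible vscal Phi1) (H2 : admissible vscal Phi2)
  (c : nat -> R) (Hc_incr : Un_growing c) (Hc_inf : cv_infty c)
  (B : nat -> V -> Prop)
  (HB1 : forall n, ER_le (Phi1 (B n)) (Fin 1))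
  (HB2 : forall n, ER_le (Fin (c n)) (Phi2 (B n))) :
  exists A : V -> Prop, ER_le (Phi1 A) (Fin 1) /\ Phi2 A = Inf.
Proof.
  destruct H1 as [P10 [P1s [P1m P1u]]].
  destruct H2 as [P20 [P2s [P2m P2u]]].
  set (l := fun k : nat => (/2)^(S k)).
  assert (Hl : forall k, 0 < l k) by (intro k; apply pow_lt; lra).
  set (nf := fun k => proj1_sig (constructive_indefinite_description _
                                  (Hc_inf (INR k / l k)))).
  assert (Hnf : forall k, INR k / l k < c (nf k)).
  { intro k. unfold nf. destruct (constructive_indefinite_description _ _) as [N HN].
    simpl. apply HN. lia. }
  set (Ak := fun k => scale_set vscal (l k) (B (nf k))).
  exists (bigUnion Ak). split.
  - assert (Hv : forall k, exists a, Phi1 (B (nf k)) = Fin a /\ 0 <= a <= 1).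
    { intro k. specialize (HB1 (nf k)). specialize (P10 (B (nf k))).
      destruct (Phi1 (B (nf k))) as [a|]; simpl in *; [|contradiction].
      exists a. split; [reflexivity|lra]. }
    set (g := fun k => l k * proj1_sig (constructive_indefinite_description _ (Hv k))).
    destruct (series_exists (fun k => Phi1 (Ak k)) g) as [s [Hs1 Hs2]].
    + intro k. unfold Ak, g. rewrite P1s.
      destruct (constructive_indefinite_description _ (Hv k)) as [a Ha'].
      simpl. destruct Ha' as [Ha _]. rewrite Ha. simpl. rewrite Rabs_pos_eq by (apply Rlt_le, Hl). reflexivity.
    + intro k. unfold g.
      destruct (constructive_indefinite_description _ (Hv k)) as [a Ha'].
      simpl. destruct Ha' as [_ Ha]. pose proof (Hl k). unfold l in *. split; [nra|].
      simpl in *. nra.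
    + specialize (P1u Ak s Hs1). destruct (Phi1 (bigUnion Ak)) as [x|];
      destruct s as [y|]; simpl in *; auto; lra.
  - destruct (Phi2 (bigUnion Ak)) as [r|] eqn:Er; [|reflexivity].
    exfalso. destruct (nat_unb r) as [k Hk].
    assert (Hsub : subset (Ak k) (bigUnion Ak)) by (intros v Hv; exists k; exact Hv).
    pose proof (P2m _ _ Hsub) as Hle. rewrite Er in Hle.
    unfold Ak in Hle. rewrite P2s in Hle.
    rewrite Rabs_pos_eq in Hle by (apply Rlt_le, Hl).
    specialize (HB2 (nf k)). specialize (Hnf k). pose proof (Hl k).
    destruct (Phi2 (B (nf k))) as [b|]; simpl in *.
    + assert (INR k < l k * b).
      { apply Rmult_lt_compat_l with (r := l k) in Hnf; [|lra].
        unfold Rdiv in Hnf. rewrite <- Rmult_assoc, (Rmult_comm (l k)), Rmult_assoc,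
          Rinv_r, Rmult_1_r in Hnf by lra. nra. }
      lra.
    + destruct (Req_EM_T (l k) 0); [lra|]. exact Hle.
Qed.
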